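(* Let $C\in\mathbb{R}^{n\times n}$ be symmetric and let $(Z,k)$ be an optimal solution of $$\max_{Z,k}\ \langle C,Z\rangle-\tfrac12k^Tk\quad\text{s.t. } Z_{ii}=k_i\ (i=1,\dots,n),\ Z\succeq0.$$ Define $w\in\mathbb{R}^n$ by $w_i=Z_{ii}$. Then $w$ is an optimal solution of $$\min_{w\in\mathbb{R}^n}\ \tfrac12w^Tw\quad\text{s.t. } \operatorname{Diag}(w)\succeq C.$$
   Context: $\operatorname{Diag}(w)$ is the diagonal matrix with diagonal $w$; $\langle C,Z\rangle=\operatorname{tr}(CZ)$. *)

(* Defs.v *)
From mathcomp Require Import all_boot all_order all_algebra.
From mathcomp Require Import reals.
Set Implicit Arguments. Unset Strict Implicit. Unset Printing Implicit Defensive.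
Import Order.TTheory GRing.Theory Num.Theory.
Local Open Scope ring_scope.

Definition psd (R : realType) (n : nat) (A : 'M[R]_n) : Prop :=
  A^T = A /\ forall x : 'cV[R]_n, 0 <= (x^T *m A *m x) 0 0.

Definition frob (R : realType) (n : nat) (C Z : 'M[R]_n) : R := \tr (C *m Z).

Definition sqnorm (R : realType) (n : nat) (k : 'cV[R]_n) : R :=
  \sum_(i < n) k i 0 ^+ 2.

Definition primal_feasible (R : realType) (n : nat) (Z : 'M[R]_n) (k : 'cV[R]_n) : Prop :=
  (forall i : 'I_n, Z i i = k i 0) /\ psd Z.

Definition primal_obj (R : realType) (n : nat) (C Z : 'M[R]_n) (k : 'cV[R]_n) : R :=
  frob C Z - sqnorm k / 2.

Definition primal_optimal (R : realType) (n : nat) (C Z : 'M[R]_n) (k : 'cV[R]_n) : Prop :=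
  primal_feasible Z k /\
  forall (Z' : 'M[R]_n) (k' : 'cV[R]_n), primal_feasible Z' k' ->
    primal_obj C Z' k' <= primal_obj C Z k.

Definition dual_feasible (R : realType) (n : nat) (C : 'M[R]_n) (w : 'cV[R]_n) : Prop :=
  psd (diag_mx w^T - C).

Definition dual_optimal (R : realType) (n : nat) (C : 'M[R]_n) (w : 'cV[R]_n) : Prop :=
  dual_feasible C w /\
  forall w' : 'cV[R]_n, dual_feasible C w' -> sqnorm w / 2 <= sqnorm w' / 2.

(* Main.v *)
Require Import Defs.
From mathcomp Require Import all_boot all_order all_algebra.
From mathcomp Require Import reals ring lra zify.
Import Order.TTheory GRing.Theory Num.Theory.
Local Open Scope ring_scope.

Set Implicit Arguments. Unset Strict Implicit.
Section S.
Variable R : realType.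

Definition qf n (A : 'M[R]_n) (x : 'I_n -> R) :=
  \sum_(i < n) \sum_(j < n) x i * A i j * x j.
Definition psdS n (A : 'M[R]_n) :=
  (forall i j, A i j = A j i) /\ forall x, 0 <= qf A x.

Lemma sum_delta n (F : 'I_n -> R) p : \sum_j (j == p)%:R * F j = F p.
Proof.
rewrite (bigD1 p) //= eqxx mul1r big1 ?addr0 // => j /negbTE ->; by rewrite mul0r.
Qed.

Lemma qf_shift n (A : 'M[R]_n) x t p : (forall i j, A i j = A j i) ->
  qf A (fun i => x i + t * (i == p)%:R) =
  qf A x + 2 * t * (\sum_j A p j * x j) + t ^+ 2 * A p p.
Proof.
move=> sA; rewrite /qf.
have E : forall i j, (x i + t * (i == p)%:R) * A i j * (x j + t * (j == p)%:R) =
  x i * A i j * x j + (i == p)%:R * (t * A i j * x j)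
  + (j == p)%:R * (t * x i * A i j) + (i == p)%:R * ((j == p)%:R * (t ^+ 2 * A i j)).
  by move=> i j; ring.
under eq_bigr => i _ do under eq_bigr => j _ do rewrite E.
under eq_bigr => i _ do rewrite !big_split /= -!mulr_sumr sum_delta sum_delta.
rewrite !big_split /= sum_delta sum_delta.
have -> : \sum_i t * x i * A i p = t * \sum_j A p j * x j.
  rewrite mulr_sumr; apply: eq_bigr => i _; rewrite sA; ring.
have -> : \sum_i t * A p i * x i = t * \sum_j A p j * x j.
  by rewrite mulr_sumr; apply: eq_bigr => i _; ring.
ring.
Qed.

Lemma psd_diag n (A : 'M[R]_n) p : psdS A -> 0 <= A p p.
Proof.
move=> [sA qA]; have := qA (fun i => 0 + 1 * (i == p)%:R).
rewrite qf_shift // /qf.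
rewrite big1 ?add0r; last by move=> i _; rewrite big1 // => j _; rewrite !mul0r.
rewrite big1 ?mulr0 ?add0r ?expr1n ?mul1r //.
by move=> j _; rewrite mulr0.
Qed.

Lemma psd_row0 n (A : 'M[R]_n) p j : psdS A -> A p p = 0 -> A p j = 0.
Proof.
move=> [sA qA] App.
have key : forall t, 0 <= A j j + 2 * t * A p j.
  move=> t; have := qA (fun i => (i == j)%:R + t * (i == p)%:R).
  rewrite qf_shift // App mulr0 addr0.
  have -> : qf A (fun i => (i == j)%:R) = A j j.
    rewrite /qf (eq_bigr (fun i => (i == j)%:R * \sum_k (k == j)%:R * A i k)).
      by rewrite sum_delta sum_delta.
    move=> i _; rewrite mulr_sumr; apply: eq_bigr => k _; ring.
  by rewrite (eq_bigr (fun k => (k == j)%:R * A p k)) ?sum_delta // => k _; rewrite mulrC.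
apply/eqP; apply/negPn/negP => H.
have := key (- (A j j + 1) / (2 * A p j)).
have -> : A j j + 2 * (- (A j j + 1) / (2 * A p j)) * A p j = -1.
  by field.
by rewrite ler0N1.
Qed.


Definition trs n (M Z : 'M[R]_n) := \sum_(i < n) \sum_(j < n) M i j * Z j i.

Lemma trace_psd n (M Z : 'M[R]_n) : psdS M -> psdS Z -> 0 <= trs M Z.
Proof.
move=> pM.
suff H : forall m (Z : 'M[R]_n), psdS Z ->
    (forall i j : 'I_n, (m <= i)%N -> Z i j = 0) -> 0 <= trs M Z.
  by move=> pZ; apply: (H n) => // i j; rewrite leqNgt ltn_ord.
elim=> [|m IH] Z0 pZ supp.
  by rewrite /trs big1 // => i _; rewrite big1 // => j _; rewrite supp // mulr0.
have sym := proj1 pZ.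
case: (ltnP m n) => [mn|nm]; last first.
  apply: IH => // i j mi; exfalso; have := ltn_ord i; lia.
set p := Ordinal mn.
have [d0|dpos] := eqVneq (Z0 p p) 0.
  apply: IH => // i j mi; case: (eqVneq i p) => [->|ip]; first exact: psd_row0.
  apply: supp; move: ip; rewrite -val_eqE /= => ip; lia.
have dp : 0 < Z0 p p by rewrite lt_def dpos psd_diag.
pose d : R := Z0 p p.
have {}dpos : d != 0 := dpos. have {}dp : 0 < d := dp.
pose Z' := \matrix_(i, j) (Z0 i j - Z0 i p * Z0 p j / d).
have pZ' : psdS Z'.
  split.
    move=> i j; rewrite !mxE (sym i j); congr (_ - _).
    rewrite [Z0 i p]sym [Z0 j p]sym; ring.
  move=> x; set s := \sum_j Z0 p j * x j.
  have -> : qf Z' x = qf Z0 (fun i => x i + (- (s / d)) * (i == p)%:R).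
    rewrite qf_shift // -/s /qf.
    have E : forall i j, x i * Z' i j * x j =
      x i * Z0 i j * x j - (x i * Z0 i p) * (Z0 p j * x j) / d.
      by move=> i j; rewrite mxE; ring.
    under eq_bigr => i _ do under eq_bigr => j _ do rewrite E.
    under eq_bigr => i _ do rewrite sumrB.
    rewrite sumrB.
    have -> : \sum_(i < n) \sum_(j < n) x i * Z0 i p * (Z0 p j * x j) / d =
        (\sum_(i < n) x i * Z0 i p) * s / d.
      rewrite big_distrlr /= mulr_suml; apply: eq_bigr => i _.
      by rewrite mulr_suml.
    have -> : \sum_(i < n) x i * Z0 i p = s.
      by apply: eq_bigr => i _; rewrite sym mulrC.
    by rewrite /d; field.
  exact: (proj2 pZ).
have supp' : forall i j : 'I_n, (m <= i)%N -> Z' i j = 0.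
  move=> i j mi; rewrite mxE; case: (eqVneq i p) => [->|ip].
    by rewrite /d; field.
  have mi' : (m.+1 <= i)%N by move: ip; rewrite -val_eqE /= => ip; lia.
  by rewrite (supp i j mi') (supp i p mi') !mul0r subr0.
have := IH Z' pZ' supp'.
have -> : trs M Z0 = trs M Z' + qf M (fun i => Z0 i p) / d.
  have -> : trs M Z0 = \sum_(i < n) \sum_(j < n)
      (M i j * Z' j i + Z0 i p * M i j * Z0 j p / d).
    apply: eq_bigr => i _; apply: eq_bigr => j _.
    rewrite !mxE [Z0 i p]sym; by field.
  under eq_bigr => i _ do rewrite big_split.
  rewrite big_split /=; congr (_ + _).
  rewrite /qf mulr_suml; apply: eq_bigr => i _; rewrite mulr_suml.
  done.
move=> h; apply: addr_ge0 => //; apply: divr_ge0; [exact: (proj2 pM) | exact: ltW].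
Qed.


Lemma eq_qf n (A : 'M[R]_n) x y : (forall i, x i = y i) -> qf A x = qf A y.
Proof. by move=> e; apply: eq_bigr => i _; apply: eq_bigr => j _; rewrite !e. Qed.

Lemma qf_mx n (A : 'M[R]_n) (x : 'cV[R]_n) :
  (x^T *m A *m x) 0 0 = qf A (fun i => x i 0).
Proof.
rewrite mxE /qf.
under eq_bigr => j _ do rewrite mxE big_distrl /=.
rewrite exchange_big; apply: eq_bigr => i _; apply: eq_bigr => j _.
by rewrite !mxE.
Qed.

Lemma psdE n (A : 'M[R]_n) : psd A <-> psdS A.
Proof.
split.
  move=> [sA q]; split.
    by move=> i j; have := congr1 (fun M : 'M[R]_n => M i j) sA; rewrite mxE.
  move=> x; have := q (\col_i x i); rewrite qf_mx.
  by rewrite (eq_qf A (y := x)) // => i; rewrite mxE.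
move=> [sA q]; split.
  by apply/matrixP => i j; rewrite mxE.
by move=> x; rewrite qf_mx.
Qed.

Lemma trE n (C Z : 'M[R]_n) : frob C Z = trs C Z.
Proof. by rewrite /frob /mxtrace; apply: eq_bigr => i _; rewrite mxE. Qed.


Lemma real1 (a b : R) : 0 <= b ->
  (forall t : R, 0 <= t -> t * a - t ^+ 2 * b / 2 <= a - b / 2) -> b <= a.
Proof.
move=> b0 H; rewrite leNgt; apply/negP => ab.
pose D : R := 2 * b - a.
have D0 : 0 < D by rewrite /D; lra.
have := H (b / D) (divr_ge0 b0 (ltW D0)).
have -> : b / D * a - (b / D) ^+ 2 * b / 2 = (2 * a * b * D - b ^+ 3) / (2 * D ^+ 2).
  by field; rewrite gt_eqF.
rewrite ler_pdivrMr; last by rewrite mulr_gt0 // exprn_gt0.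
move=> h.
have E : (a - b / 2) * (2 * D ^+ 2) - (2 * a * b * D - b ^+ 3) =
  - ((b - a) ^+ 2 * (b + 2 * (b - a))).
  by rewrite /D; field.
have P : 0 < (b - a) ^+ 2 * (b + 2 * (b - a)).
  by apply: mulr_gt0; [rewrite exprn_gt0 // subr_gt0 | lra].
lra.
Qed.

Lemma real2 (e q : R) : 0 <= q ->
  (forall s : R, 0 < s -> s * e <= s ^+ 2 * q / 2) -> e <= 0.
Proof.
move=> q0 H; rewrite leNgt; apply/negP => e0.
have q1 : 0 < q + 1 by lra.
have := H (e / (q + 1)) (divr_gt0 e0 q1).
have -> : e / (q + 1) * e = (2 * e ^+ 2 * (q + 1)) / (2 * (q + 1) ^+ 2).
  by field; rewrite gt_eqF.
have -> : (e / (q + 1)) ^+ 2 * q / 2 = (e ^+ 2 * q) / (2 * (q + 1) ^+ 2).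
  by field; rewrite gt_eqF.
rewrite ler_pM2r; last by rewrite invr_gt0 mulr_gt0 // exprn_gt0.
nra.
Qed.

End S.

Lemma sum2_split (R : realType) n (F G H : 'I_n -> 'I_n -> R) :
  (forall i j, F i j = G i j + H i j) ->
  \sum_(i < n) \sum_(j < n) F i j =
  \sum_(i < n) \sum_(j < n) G i j + \sum_(i < n) \sum_(j < n) H i j.
Proof.
move=> e; under eq_bigr => i _ do (under eq_bigr => j _ do rewrite e; rewrite big_split).
by rewrite big_split.
Qed.

Theorem lemmaC2 (R : realType) (n : nat) (C Z : 'M[R]_n) (k : 'cV[R]_n) :
  C^T = C ->
  primal_optimal C Z k ->
  dual_optimal C (\col_(i < n) Z i i).
Proof.
move=> sC [[dk pZ] opt].
have [symZ qZ] := (psdE Z).1 pZ.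
have symC : forall i j, C i j = C j i.
  by move=> i j; have := congr1 (fun M : 'M[R]_n => M i j) sC; rewrite mxE.
pose b := \sum_(i < n) Z i i ^+ 2.
pose a := trs C Z.
have sqw : sqnorm (\col_(i < n) Z i i) = b.
  by apply: eq_bigr => i _; rewrite mxE.
have sqk : sqnorm k = b by apply: eq_bigr => i _; rewrite dk.
have b0 : 0 <= b by apply: sumr_ge0 => i _; apply: sqr_ge0.
have opt' : forall Z' : 'M[R]_n, psdS Z' ->
    trs C Z' - (\sum_(i < n) Z' i i ^+ 2) / 2 <= a - b / 2.
  move=> Z' pZ'.
  have fe : primal_feasible Z' (\col_i Z' i i).
    by split; [move=> i; rewrite mxE | exact/psdE].
  have := opt Z' _ fe.
  rewrite /primal_obj !trE sqk.
  by rewrite (_ : sqnorm _ = \sum_(i < n) Z' i i ^+ 2) //; apply: eq_bigr => i _; rewrite mxE.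
have ab : b <= a.
  apply: real1 => // t t0.
  have pt : psdS (t *: Z).
    split; first by move=> i j; rewrite !mxE symZ.
    move=> x; have -> : qf (t *: Z) x = t * qf Z x.
      rewrite /qf mulr_sumr; apply: eq_bigr => i _; rewrite mulr_sumr.
      by apply: eq_bigr => j _; rewrite mxE; ring.
    exact: mulr_ge0.
  have := opt' _ pt.
  have -> : trs C (t *: Z) = t * a.
    rewrite /a /trs mulr_sumr; apply: eq_bigr => i _; rewrite mulr_sumr.
    by apply: eq_bigr => j _; rewrite mxE; ring.
  have -> : \sum_(i < n) (t *: Z) i i ^+ 2 = t ^+ 2 * b.
    by rewrite /b mulr_sumr; apply: eq_bigr => i _; rewrite mxE; ring.
  by [].
split.
  apply/psdE; split.
    by move=> i j; rewrite !mxE symC eq_sym; congr (_ - _); case: eqVneq => [->|]; rewrite ?mulr0n ?mulr1n.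
  move=> x.
  pose W := \sum_(i < n) Z i i * x i ^+ 2.
  pose q := \sum_(i < n) x i ^+ 4.
  have -> : qf (diag_mx (\col_(i < n) Z i i)^T - C) x = W - qf C x.
    rewrite /qf /W -sumrB; apply: eq_bigr => i _.
    under eq_bigr => j _ do rewrite !mxE mulrBr mulrBl.
    rewrite sumrB; congr (_ - _).
    rewrite (bigD1 i) //= eqxx mulr1n big1 ?addr0; first by ring.
    by move=> j /negbTE; rewrite eq_sym => ->; rewrite mulr0n mulr0 mul0r.
  rewrite subr_ge0 -subr_le0.
  apply: (@real2 _ _ q); first by apply: sumr_ge0 => i _; rewrite exprn_even_ge0.
  move=> s s0.
  pose Z' := \matrix_(i, j) (Z i j + s * (x i * x j)).
  have pZ' : psdS Z'.
    split; first by move=> i j; rewrite !mxE symZ; congr (_ + _ * _); ring.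
    move=> y.
    have -> : qf Z' y = qf Z y + s * (\sum_(i < n) y i * x i) ^+ 2.
      rewrite /qf (@sum2_split _ _ _ (fun i j => y i * Z i j * y j)
         (fun i j => s * ((y i * x i) * (y j * x j)))); last first.
        by move=> i j; rewrite mxE; ring.
      congr (_ + _); rewrite expr2 big_distrlr mulr_sumr; apply: eq_bigr => i _.
      by rewrite mulr_sumr.
    by apply: addr_ge0 => //; apply: mulr_ge0; [exact: ltW | exact: sqr_ge0].
  have := opt' _ pZ'.
  have -> : trs C Z' = a + s * qf C x.
    rewrite /a /trs /qf (@sum2_split _ _ _ (fun i j => C i j * Z j i)
         (fun i j => s * (x i * C i j * x j))); last first.
      by move=> i j; rewrite mxE; ring.
    congr (_ + _); rewrite mulr_sumr; apply: eq_bigr => i _.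
    by rewrite mulr_sumr.
  have -> : \sum_(i < n) Z' i i ^+ 2 = b + 2 * s * W + s ^+ 2 * q.
    rewrite /b /W /q !mulr_sumr -!big_split /=; apply: eq_bigr => i _.
    by rewrite mxE; ring.
  move=> h.
  rewrite mulrBr; lra.
move=> w' fw'.
have pM := (psdE _).1 fw'.
have := trace_psd pM ((psdE Z).1 pZ).
rewrite sqw.
have -> : trs (diag_mx w'^T - C) Z = \sum_(i < n) w' i 0 * Z i i - a.
  rewrite /a /trs -sumrB; apply: eq_bigr => i _.
  under eq_bigr => j _ do rewrite !mxE mulrBl.
  rewrite sumrB; congr (_ - _).
  rewrite (bigD1 i) //= eqxx mulr1n big1 ?addr0 //.
  move=> j ji; rewrite eq_sym in ji; by rewrite (negbTE ji) mulr0n mul0r.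
have sq : \sum_(i < n) w' i 0 * Z i i <= (sqnorm w' + b) / 2.
  apply: (@le_trans _ _ (\sum_(i < n) (w' i 0 ^+ 2 + Z i i ^+ 2) / 2)).
    apply: ler_sum => i _; have := sqr_ge0 (w' i 0 - Z i i); rewrite sqrrB; lra.
  by rewrite -mulr_suml big_split.
move=> h; lra.
Qed.
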